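(* Let $f:\mathbb{R}^n_{>0} \to \mathbb{R}^n_{>0}$ be order-preserving, homogeneous, multiplicatively convex, and analytic. Then $f$ is type K order-preserving if and only if for every $i \in [n]$ there is an arc from $i$ to itself in $\mathcal{G}(f)$, i.e. $\lim_{t\to\infty} f(\exp(t e_i))_i = \infty$ for every $i\in[n]$.
   Context: $[n] = \{1,\dots,n\}$; $e_i$ are the standard basis vectors; $\log$ and $\exp$ act entrywise. The order on $\mathbb{R}^n$ is entrywise. $f$ is order-preserving if $x \le y \Rightarrow f(x)\le f(y)$; homogeneous if $f(tx) = t f(x)$ for $t > 0$; analytic if each coordinate is real analytic; multiplicatively convex if $\log\circ f\circ\exp$ has convex coordinate functions on $\mathbb{R}^n$. $f$ is type K order-preserving if for any $x \le y$ there is $\epsilon>0$ with $f(y) - f(x) \ge \epsilon(y-x)$. The directed graph $\mathcal{G}(f)$ has vertices $[n]$ and an arc from $i$ to $j$ iff $\lim_{t\to\infty} f(\exp(t e_j))_i = \infty$. *)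

(* Defs.v *)
From HB Require Import structures.
From mathcomp Require Import all_boot all_order all_algebra.
From mathcomp Require Import all_classical all_reals all_analysis.
Set Implicit Arguments. Unset Strict Implicit. Unset Printing Implicit Defensive.
Import Order.TTheory GRing.Theory Num.Theory.
Import numFieldNormedType.Exports.
Local Open Scope classical_set_scope.
Local Open Scope ring_scope.

Section Defs.
Variables (R : realType) (n : nat).
Notation vec := ('I_n -> R).

Definition vle (x y : vec) : Prop := forall i, x i <= y i.
Definition vpos (x : vec) : Prop := forall i, 0 < x i.

Definition basis (j : 'I_n) : vec := fun k => (k == j)%:R.
Definition vexp (u : vec) : vec := fun k => expR (u k).

Definition maps_pos (f : vec -> vec) : Prop :=
  forall x, vpos x -> vpos (f x).

Definition order_preserving (f : vec -> vec) : Prop :=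
  forall x y, vpos x -> vpos y -> vle x y -> vle (f x) (f y).

Definition homogeneous (f : vec -> vec) : Prop :=
  forall (t : R) x, 0 < t -> vpos x -> f (fun k => t * x k) = (fun k => t * f x k).

Definition mult_convex (f : vec -> vec) : Prop :=
  forall (i : 'I_n) (u v : vec) (l : R), 0 <= l <= 1 ->
    ln (f (vexp (fun k => l * u k + (1 - l) * v k)) i)
    <= l * ln (f (vexp u) i) + (1 - l) * ln (f (vexp v) i).

(* The multi-indexed series is summed along exhausting cubes {a : a_k < N};
   absolute convergence makes the value independent of the exhaustion. *)
Definition ps_term (c : ('I_n -> nat) -> R) (x y : vec) (a : 'I_n -> nat) : R :=
  c a * \prod_(k < n) (y k - x k) ^+ (a k).

Definition cube_sum (c : ('I_n -> nat) -> R) (x y : vec) (N : nat) : R :=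
  \sum_(a : {ffun 'I_n -> 'I_N}) ps_term c x y (fun k => nat_of_ord (a k)).

Definition cube_abs_sum (c : ('I_n -> nat) -> R) (x y : vec) (N : nat) : R :=
  \sum_(a : {ffun 'I_n -> 'I_N}) `|ps_term c x y (fun k => nat_of_ord (a k))|.

Definition analytic_at (g : vec -> R) (x : vec) : Prop :=
  exists r : R, 0 < r /\ exists c : ('I_n -> nat) -> R,
    forall y : vec, (forall k, `|y k - x k| < r) ->
      (exists M : R, forall N, cube_abs_sum c x y N <= M) /\
      (cube_sum c x y @ \oo --> g y).

Definition analytic_pos (f : vec -> vec) : Prop :=
  forall (i : 'I_n) x, vpos x -> analytic_at (fun y => f y i) x.

Definition typeK (f : vec -> vec) : Prop :=
  forall x y, vpos x -> vpos y -> vle x y ->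
    exists eps : R, 0 < eps /\
      forall k, f y k - f x k >= eps * (y k - x k).

Definition graph_arc (f : vec -> vec) (i j : 'I_n) : Prop :=
  (fun t : R => f (vexp (fun k => t * basis j k)) i) @ +oo --> +oo.

End Defs.

(* Main.v *)
Require Import Defs.
From HB Require Import structures.
From mathcomp Require Import all_boot all_order all_algebra.
From mathcomp Require Import all_classical all_reals all_analysis.
From mathcomp Require Import ring lra zify.
Import Order.TTheory GRing.Theory Num.Theory.
Import numFieldNormedType.Exports.
Local Open Scope classical_set_scope.
Local Open Scope ring_scope.
Section Aux.
Variable R : realType.

Lemma sum_delta (N m : nat) (X : R) :
  \sum_(i < N) ((i : nat) == m)%:R * X = (m < N)%:R * X.
Proof.
elim: N => [|N IH]; first by rewrite big_ord0 mul0r.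
rewrite big_ord_recr /= IH -mulrDl -natrD; congr (_%:R * _).
case: (ltngtP m N) => h; [by rewrite ltnS ltnW | by rewrite ltnS leqNgt h | by rewrite h ltnSn].
Qed.

Lemma small_zero (X K : R) : 0 <= X -> 0 < K ->
  (forall t, 0 < t -> t < 1 -> X <= t * K) -> X = 0.
Proof.
move=> X0 K0 H; apply/eqP; rewrite eq_le X0 andbT; apply/negP => /negP.
rewrite -ltNge => Xp.
have hd : 0 < X + K *+ 2 by rewrite addr_gt0 // mulrn_wgt0.
have := H (X / (X + K *+ 2)).
rewrite divr_gt0 // ltr_pdivrMr // mul1r ltrDl mulrn_wgt0 //.
move=> /(_ isT isT); rewrite mulrAC ler_pdivlMr // => h.
nra.
Qed.

Lemma ev_nat (P : nat -> Prop) : (\forall N \near \oo, P N) -> exists N0, forall N, (N0 <= N)%N -> P N.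
Proof. by move=> [N0 _ H]; exists N0 => N /H. Qed.

Lemma ident (a : nat -> R) (q M : R) : 0 < q ->
  (forall N, \sum_(i < N) `|a i| * q ^+ i <= M) ->
  (forall s, -q < s -> s < 0 -> (fun N => \sum_(i < N) a i * s ^+ i) @ \oo --> 0) ->
  forall m, a m = 0.
Proof.
move=> q0 HM Hc; have M0 : 0 <= M by have := HM 0%N; rewrite big_ord0.
elim/ltn_ind => m IH.
suff : `|a m| * q ^+ m = 0.
  by move/eqP; rewrite mulf_eq0 normr_eq0 expf_eq0 (gt_eqF q0) andbF orbF => /eqP.
apply: (@small_zero _ (q ^+ m + M)).
- by rewrite mulr_ge0 // exprn_ge0 // ltW.
- by rewrite ltr_wpDr // exprn_gt0.
move=> t t0 t1.
have qt0 : 0 < q * t by rewrite mulr_gt0.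
have := Hc (- (q * t)).
rewrite ltrN2 gtr_pMr // ltrNl oppr0 qt0 => /(_ t1 isT).
move=> /cvgr0Pnorm_lt /(_ ((q * t) ^+ m * t)).
rewrite mulr_gt0 // ?exprn_gt0 // => /(_ isT) /ev_nat [N0 HN0].
set N := maxn N0 m.+1.
have := HN0 N (leq_maxl _ _) => /= HP.
have mN : (m < N)%N by rewrite leq_max ltnSn orbT.
set s := - (q * t).
have dec : \sum_(i < N) a i * s ^+ i = a m * s ^+ m +
   \sum_(i < N) ((m < i)%N)%:R * (a i * s ^+ i).
  have e := sum_delta N m (a m * s ^+ m); rewrite mN mul1r in e.
  rewrite -e -big_split /=.
  apply: eq_bigr => i _.
  case: (ltngtP i m) => h /=; rewrite ?mulr0n ?mulr1n ?mul0r ?mul1r ?add0r ?addr0 //; [by rewrite IH // mul0r | by rewrite h].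
have bnd : `|\sum_(i < N) ((m < i)%N)%:R * (a i * s ^+ i)| <= t ^+ m.+1 * M.
  apply: (le_trans (ler_norm_sum _ _ _)).
  apply: (le_trans _ (ler_wpM2l (exprn_ge0 _ (ltW t0)) (HM N))).
  rewrite mulr_sumr; apply: ler_sum => i _.
  case: (ltnP m i) => h /=; last first.
    rewrite mul0r normr0; apply: mulr_ge0; [apply: exprn_ge0; exact: ltW | apply: mulr_ge0 => //; apply: exprn_ge0; exact: ltW].
  rewrite mul1r normrM normrX normrN normrM (gtr0_norm q0) (gtr0_norm t0) exprMn.
  rewrite [X in _ <= X]mulrCA; apply: ler_wpM2l => //.
  rewrite [X in _ <= X]mulrC; apply: ler_wpM2l; first exact: exprn_ge0 (ltW q0).
  by apply: ler_wiXn2l => //; exact: ltW.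
have h1 : `|a m * s ^+ m| <= (q * t) ^+ m * t + t ^+ m.+1 * M.
  have -> : a m * s ^+ m = \sum_(i < N) a i * s ^+ i -
      \sum_(i < N) ((m < i)%N)%:R * (a i * s ^+ i) by rewrite dec addrK.
  apply: (le_trans (ler_normB _ _)); apply: lerD => //; exact: ltW.
rewrite normrM normrX normrN normrM (gtr0_norm q0) (gtr0_norm t0) exprMn in h1.
have e1 : t ^+ m * (`|a m| * q ^+ m) = `|a m| * (q ^+ m * t ^+ m) by ring.
have e2 : t ^+ m * (t * (q ^+ m + M)) = q ^+ m * t ^+ m * t + t ^+ m.+1 * M.
  by rewrite exprS; ring.
by rewrite -(ler_pM2l (exprn_gt0 m t0)) e1 e2.
Qed.
End Aux.
Section Red.
Variables (R : realType) (n : nat) (k : 'I_n).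

Definition onk (a : 'I_n -> nat) := [forall j, (j != k) ==> (a j == 0%N)].

Lemma sum_line (N : nat) (F : {ffun 'I_n -> 'I_N} -> R) (G : 'I_N -> R) :
  (forall a, F a = if onk (fun j => nat_of_ord (a j)) then G (a k) else 0) ->
  \sum_a F a = \sum_(m < N) G m.
Proof.
move=> HF.
rewrite (partition_big (fun a : {ffun 'I_n -> 'I_N} => a k) xpredT) //=.
apply: eq_bigr => m _.
have m0 : (0 < N)%N by apply: leq_ltn_trans (ltn_ord m).
pose z : 'I_N := Ordinal m0.
pose e := [ffun j => if j == k then m else z].
have ek : e k == m by rewrite ffunE eqxx.
rewrite (bigD1 e) //= big1 ?addr0.
  rewrite HF ffunE eqxx; case: ifP => //; move/negP; case.
  by apply/forallP => j; apply/implyP => /negbTE jk; rewrite ffunE jk.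
move=> a /andP [/eqP ak nae]; rewrite HF; case: ifP => // /forallP H.
case/negP: nae; apply/eqP/ffunP => j; rewrite ffunE.
case: ifP => [/eqP -> // | /negbT jk]; apply: val_inj => /=.
by move: (implyP (H j) jk) => /eqP.
Qed.

Definition cc (c : ('I_n -> nat) -> R) (m : nat) : R :=
  c (fun j => if j == k then m else 0%N).

Lemma ps_line (c : ('I_n -> nat) -> R) (x : 'I_n -> R) (s : R) (a : 'I_n -> nat) :
  ps_term c x (fun j => x j + s * Defs.basis R k j) a =
  if onk a then cc c (a k) * s ^+ (a k) else 0.
Proof.
rewrite /ps_term.
have hy j : (x j + s * Defs.basis R k j) - x j = s * Defs.basis R k j.
  by rewrite addrC addKr.
under eq_bigr do rewrite hy.
case: ifP => H.
  congr (_ * _).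
    congr c; apply: funext => j; case: eqP => [-> // | /eqP jk].
    by move: (implyP (forallP H j) jk) => /eqP.
  rewrite (bigD1 k) //= big1 ?mulr1 /Defs.basis ?eqxx ?mulr1 // => j jk.
  by move: (implyP (forallP H j) jk) => /eqP ->; rewrite expr0.
move/negbT/forallPn: H => [j]; rewrite negb_imply => /andP [jk aj].
rewrite (bigD1 j) //= /Defs.basis (negbTE jk) mulr0 expr0n (negbTE aj) mul0r mulr0 //.
Qed.
End Red.
Arguments cc {R n} k c m.
Arguments onk {n} k a.

Section Red2.
Variables (R : realType) (n : nat) (k : 'I_n).
Lemma cube_line (c : ('I_n -> nat) -> R) (x : 'I_n -> R) (s : R) N :
  cube_sum c x (fun j => x j + s * Defs.basis R k j) N = \sum_(m < N) cc k c m * s ^+ m.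
Proof. by apply: sum_line => a; rewrite ps_line. Qed.
Lemma cube_abs_line (c : ('I_n -> nat) -> R) (x : 'I_n -> R) (s : R) N :
  cube_abs_sum c x (fun j => x j + s * Defs.basis R k j) N = \sum_(m < N) `|cc k c m * s ^+ m|.
Proof. by apply: (@sum_line R n k) => a; rewrite ps_line; case: ifP; rewrite ?normr0. Qed.
End Red2.

Section Main.
Variables (R : realType) (n : nat) (f : ('I_n -> R) -> 'I_n -> R).
Hypotheses (fpos : maps_pos f) (fop : order_preserving f) (fhom : homogeneous f).

Definition L (k : 'I_n) (x : 'I_n -> R) (s : R) : 'I_n -> R :=
  fun j => x j + s * Defs.basis R k j.

Lemma basis01 (k j : 'I_n) : Defs.basis R k j = 0 \/ Defs.basis R k j = 1.
Proof. by rewrite /Defs.basis; case: (j == k); [right|left]. Qed.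

Lemma Lpos k x s : vpos x -> 0 <= s -> vpos (L k x s).
Proof.
move=> xp s0 j; rewrite /L; case: (basis01 k j) => ->; rewrite ?mulr0 ?addr0 ?mulr1 //.
by rewrite ltr_wpDr.
Qed.

Lemma Lmono k x s t : s <= t -> vle (L k x s) (L k x t).
Proof.
by move=> st j; rewrite /L lerD2l; case: (basis01 k j) => ->; rewrite ?mulr0 ?mulr1.
Qed.

Lemma L0 k x : L k x 0 = x.
Proof. by apply: funext => j; rewrite /L mul0r addr0. Qed.

Lemma LL k x s t : L k (L k x s) t = L k x (s + t).
Proof. by apply: funext => j; rewrite /L mulrDl addrA. Qed.

Lemma fLmono k x s t : vpos x -> 0 <= s -> s <= t -> f (L k x s) k <= f (L k x t) k.
Proof.
move=> xp s0 st; apply: fop; [exact: Lpos | apply: Lpos => //; exact: le_trans st | exact: Lmono].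
Qed.

Lemma mincoord (x : 'I_n -> R) : vpos x -> exists mn, 0 < mn /\ forall j, mn <= x j.
Proof.
move=> xp; exists (\big[Num.min/1]_j x j); split.
  by apply: (big_ind (fun v : R => 0 < v)) => // a b a0 b0; rewrite lt_min a0 b0.
move=> j; have : j \in index_enum 'I_n by rewrite mem_index_enum.
elim: (index_enum _) => [//|i s IH]; rewrite inE big_cons ge_min.
by case/orP => [/eqP <-|/IH ->]; rewrite ?lexx ?orbT.
Qed.


Lemma unbdd k x : graph_arc f k k -> vpos x -> exists B, 0 <= B /\ f x k < f (L k x B) k.
Proof.
move=> arc xp; have [mn [mn0 hmn]] := mincoord x xp.
move: arc; rewrite /graph_arc => /cvgryPge /(_ ((f x k + 1) / mn)) [M [_ HM]].
have := HM (M + 1); rewrite ltrDl ltr01 => /(_ isT).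
set v := vexp _ => hv.
exists (mn * expR (M + 1)); split; first by rewrite mulr_ge0 // ltW ?expR_gt0.
have vp : vpos v by move=> j; exact: expR_gt0.
have le1 : vle (fun j => mn * v j) (L k x (mn * expR (M + 1))).
  move=> j; rewrite /L /v /vexp; case: (basis01 k j) => ->;
    rewrite ?mulr0 ?expR0 ?mulr1 ?addr0 //.
  by rewrite lerDr ltW.
have vp2 : vpos (fun j => mn * v j) by move=> j; rewrite mulr_gt0.
have := fop _ _ vp2 (Lpos k x _ xp (mulr_ge0 (ltW mn0) (ltW (expR_gt0 _)))) le1 k.
rewrite fhom //= => h.
apply: lt_le_trans h.
apply: (lt_le_trans _ (ler_wpM2l (ltW mn0) hv)).
by rewrite mulrC divfK ?gt_eqF // ltrDl ltr01.
Qed.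

Lemma cvg_ind0 (C : R) : (fun N : nat => (0 < N)%N%:R * C) @ \oo --> C.
Proof. by apply: cvg_near_cst; exists 1%N => // N /= h; rewrite h mulr1n mul1r. Qed.

Lemma strict k x s : graph_arc f k k -> analytic_pos f -> vpos x -> 0 < s ->
  f x k < f (L k x s) k.
Proof.
move=> arc fan xp s0.
rewrite ltNge; apply/negP => hle.
set C := f x k.
have fL t : 0 <= t -> C <= f (L k x t) k.
  by move=> t0; rewrite /C -{1}(L0 k x); apply: fLmono.
have hs : f (L k x s) k = C by apply/le_anti; rewrite hle fL // ltW.
pose A := [set t : R | 0 <= t /\ f (L k x t) k = C].
have [B [B0 hB]] := unbdd k x arc xp.
have ubA : ubound A B.
  move=> t [t0 ht]; rewrite leNgt; apply/negP => Bt.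
  have := fLmono k x B t xp B0 (ltW Bt); rewrite ht => h.
  by move: (lt_le_trans hB h); rewrite ltxx.
have supA : has_sup A.
  by split; [exists 0; split => //; rewrite L0 | exists B].
set T := sup A.
have sT : s <= T by apply: sup_upper_bound => //; split => //; exact: ltW.
have T0 : 0 < T by exact: lt_le_trans sT.
have below t : 0 <= t -> t < T -> f (L k x t) k = C.
  move=> t0 tT; have tT' : 0 < T - t by rewrite subr_gt0.
  have [e [e0 he] te] := sup_adherent tT' supA.
  have te' : t < e by rewrite -/T in te; lra.
  apply/le_anti; rewrite fL // andbT -he; apply: fLmono => //; exact: ltW.
have [r [r0 [c Hc]]] := fan k (L k x T) (Lpos k x T xp (ltW T0)).
pose q := Num.min r T / 2.
have q0 : 0 < q by rewrite /q divr_gt0 // lt_min r0 T0.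
have qr : q < r.
  have : Num.min r T <= r by rewrite ge_min lexx.
  rewrite /q; lra.
have qT : q < T.
  have : Num.min r T <= T by rewrite ge_min lexx orbT.
  rewrite /q; lra.
have Hu u : `|u| < r ->
    (exists M, forall N, \sum_(m < N) `|cc k c m * u ^+ m| <= M) /\
    ((fun N => \sum_(m < N) cc k c m * u ^+ m) @ \oo --> f (L k x (T + u)) k).
  move=> ur; have [] := Hc (L k (L k x T) u).
    move=> j; rewrite /L; case: (basis01 k j) => ->; rewrite ?mulr0 ?mulr1 addrC addKr //.
    by rewrite normr0.
  move=> [M HM] Hcv; split.
    by exists M => N; rewrite -(@cube_abs_line R n k c (L k x T) u N); exact: HM.
  rewrite -LL.
  have -> : (fun N => \sum_(m < N) cc k c m * u ^+ m) =
      cube_sum c (L k x T) (L k (L k x T) u).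
    by apply: funext => N; rewrite (@cube_line R n k c (L k x T) u N).
  exact: Hcv.
pose a i := cc k c i - ((i == 0)%N)%:R * C.
have := Hu (- q); rewrite normrN gtr0_norm // => /(_ qr) [[M HM] _].
have hbound N : \sum_(i < N) `|a i| * q ^+ i <= M + `|C|.
  apply: (@le_trans _ _ (\sum_(i < N) (`|cc k c i * (- q) ^+ i| + ((i : nat) == 0%N)%:R * `|C|))).
    apply: ler_sum => i _; rewrite /a.
    case: i => [[|i] hi] /=; rewrite ?mulr1n ?mulr0n.
      by rewrite expr0 !mulr1 !mul1r ler_normB.
    by rewrite mul0r subr0 mul0r addr0 normrM normrX normrN (gtr0_norm q0).
  rewrite big_split sum_delta /=; apply: lerD.
    exact: HM.
  by case: N => [|N] /=; rewrite ?mulr0n ?mulr1n ?mul0r ?mul1r.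
have hconv s' : - q < s' -> s' < 0 ->
    (fun N => \sum_(i < N) a i * s' ^+ i) @ \oo --> 0.
  move=> s1 s2.
  have e N : \sum_(i < N) a i * s' ^+ i =
     \sum_(i < N) cc k c i * s' ^+ i - (0 < N)%N%:R * C.
    rewrite -sum_delta -sumrB; apply: eq_bigr => i _; rewrite /a.
    rewrite mulrBl; congr (_ - _).
    by case: i => [[|i] hi] /=; rewrite ?expr0 ?mulr1 ?mulr0n ?mul0r.
  rewrite (eq_cvg _ _ e).
  have s'r : `|s'| < r by rewrite ltr0_norm //; lra.
  have h := cvgB (Hu s' s'r).2 (cvg_ind0 C).
  have hb : f (L k x (T + s')) k = C by apply: below; lra.
  rewrite hb subrr in h; exact: h.
have az := @ident R a q (M + `|C|) q0 hbound hconv.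
have [_ hq] := Hu q (ltac:(by rewrite gtr0_norm)).
have e : (fun N => \sum_(m < N) cc k c m * q ^+ m) = (fun N : nat => (0 < N)%N%:R * C).
  apply: funext => N; rewrite -sum_delta; apply: eq_bigr => i _.
  have := az i; rewrite /a => /eqP; rewrite subr_eq0 => /eqP ->.
  by case: i => [[|i] hi] /=; rewrite ?expr0 ?mulr1 ?mulr0n ?mul0r.
rewrite e in hq.
have hTq := cvg_unique (@Rhausdorff R) hq (cvg_ind0 C).
have hA : A (T + q) by split; [lra | exact: hTq].
have := sup_upper_bound supA hA; rewrite -/T; lra.
Qed.

Lemma bigmin_le (F : 'I_n -> R) j : \big[Num.min/1]_i F i <= F j.
Proof.
have : j \in index_enum 'I_n by rewrite mem_index_enum.
elim: (index_enum _) => [//|i s IH]; rewrite inE big_cons ge_min.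
by case/orP => [/eqP <-|/IH ->]; rewrite ?lexx ?orbT.
Qed.

Lemma bigmin_gt0 (F : 'I_n -> R) : (forall j, 0 < F j) -> 0 < \big[Num.min/1]_i F i.
Proof.
by move=> H; apply: (big_ind (fun v : R => 0 < v)) => // a b a0 b0; rewrite lt_min a0 b0.
Qed.

Lemma arcs_typeK : (forall i, graph_arc f i i) -> analytic_pos f -> typeK f.
Proof.
move=> arcs fan x y xp yp xy.
have st k : x k < y k -> f x k < f y k.
  move=> hk; apply: (lt_le_trans (strict k x (y k - x k) (arcs k) fan xp _)).
    by rewrite subr_gt0.
  apply: fop => //; first by apply: Lpos => //; rewrite subr_ge0 ltW.
  move=> j; rewrite /L /Defs.basis; case: eqP => [->|_].
    by rewrite mulr1 addrC subrK.
  by rewrite mulr0 addr0.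
pose e k := if x k < y k then (f y k - f x k) / (y k - x k) else 1.
have e0 k : 0 < e k.
  rewrite /e; case: ifP => // hk; rewrite divr_gt0 // subr_gt0 //; exact: st.
exists (\big[Num.min/1]_k e k); split; first exact: bigmin_gt0.
move=> k; have := bigmin_le e k; rewrite /e; case: ifP => hk h.
  by rewrite -ler_pdivlMr ?subr_gt0.
have -> : y k = x k by apply/le_anti; rewrite xy andbT leNgt hk.
by rewrite subrr mulr0 subr_ge0 fop.
Qed.


Lemma typeK_arcs : mult_convex f -> typeK f -> forall i, graph_arc f i i.
Proof.
move=> fcv tk i.
pose v t := vexp (fun j => t * Defs.basis R i j).
pose g t := ln (f (v t) i).
have vp t : vpos (v t) by move=> j; exact: expR_gt0.
have fv t : 0 < f (v t) i by exact: fpos.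
have b0 j : 0 <= Defs.basis R i j by rewrite /Defs.basis ler0n.
have lt01 : f (v 0) i < f (v 1) i.
  have vl : vle (v 0) (v 1) by move=> j; rewrite /v /vexp ler_expR ler_wpM2r // ler01.
  have [eps [eps0 He]] := tk _ _ (vp 0) (vp 1) vl.
  have := He i; rewrite /v /vexp /Defs.basis eqxx mulr1 mul0r expR0 => h.
  rewrite -subr_gt0; apply: lt_le_trans h; rewrite mulr_gt0 // subr_gt0.
set d := g 1 - g 0.
have d0 : 0 < d by rewrite subr_gt0 /g ltr_ln ?posrE.
have gt t : 1 <= t -> g 0 + t * d <= g t.
  move=> t1; have t0 : 0 < t by exact: lt_le_trans t1.
  have := fcv i (fun j => t * Defs.basis R i j) (fun j => 0 * Defs.basis R i j) t^-1.
  rewrite invr_ge0 ltW //= invf_le1 // => /(_ t1).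
  have -> : vexp (fun k => t^-1 * (t * Defs.basis R i k) + (1 - t^-1) * (0 * Defs.basis R i k)) = v 1.
    apply: funext => k; rewrite /v /vexp mul0r mulr0 addr0 mulrA mulVf ?gt_eqF //.
  rewrite -/(v t) -/(v 0) -/(g 1) -/(g t) -/(g 0) => h.
  rewrite /d.
  have : t * g 1 <= g t + (t - 1) * g 0.
    have := ler_wpM2l (ltW t0) h.
    rewrite mulrDr mulrA mulfV ?gt_eqF // mul1r mulrA mulrBr mulr1 mulfV ?gt_eqF //.
  nra.
apply/cvgryPge => A.
exists (Num.max 1 ((A - 1 - g 0) / d)); split; first exact: num_real.
move=> t; rewrite gt_max => /andP [t1 tA].
have := gt t (ltW t1).
rewrite -/(v t).
have e1 : f (v t) i = expR (g t) by rewrite /g lnK ?posrE.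
rewrite e1 => h; apply: le_trans (expR_ge1Dx _).
have : A - 1 - g 0 < t * d by rewrite -ltr_pdivrMr.
lra.
Qed.

End Main.

Theorem mainTheorem10 (R : realType) (n : nat) (f : ('I_n -> R) -> ('I_n -> R)) :
  maps_pos f -> order_preserving f -> homogeneous f -> mult_convex f ->
  analytic_pos f ->
  (typeK f <-> forall i : 'I_n, graph_arc f i i).
Proof.
move=> fpos fop fhom fcv fan; split.
  exact: typeK_arcs.
by move=> arcs; exact: arcs_typeK.
Qed.
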